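(* Let $G=(V,E,L)$ be a graph with loops and let $V^+:=\{i\in V:\{i,i\}\in L^+\}$. If $V^+$ is a stable set of the graph $(V,E)$, then $\mathrm{QP}(G)$ is second-order cone (SOC) representable.
   Context: A graph with loops is a triple $G=(V,E,L)$ where $V$ is a finite node set, $E$ is a set of unordered pairs $\{i,j\}$ of distinct nodes, and $L$ is a set of loops, each written $\{i,i\}$ for some $i\in V$ (at most one per node), partitioned as $L=L^-\cup L^+$ into minus loops and plus loops. Define $$\mathrm{QP}(G):=\mathrm{conv}\Big\{z\in\mathbb{R}^{V\cup E\cup L}: z_{ii}\ge z_i^2\ \forall\{i,i\}\in L^+,\ z_{ii}\le z_i^2\ \forall \{i,i\}\in L^-,\ z_{ij}=z_iz_j\ \forall \{i,j\}\in E,\ z_i\in[0,1]\ \forall i\in V\Big\}.$$ A convex set is SOC-representable if it is the projection of a set (in a possibly higher-dimensional space) described by finitely many linear equalities/inequalities and (rotated) second-order cone constraints composed with affine maps. *)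

(* Defs.v *)
From HB Require Import structures.
From mathcomp Require Import all_boot all_order all_algebra.
From mathcomp Require Import reals.
Set Implicit Arguments. Unset Strict Implicit. Unset Printing Implicit Defensive.
Import Order.TTheory GRing.Theory Num.Theory.
Local Open Scope ring_scope.

(* Nodes: a finite type T.  Edges: a set of 2-element subsets of T.
   Loops: a loop {i,i} is identified with its node i; L^+ and L^- are
   disjoint node sets (at most one loop per node). *)
Record graph_with_loops (T : finType) := GraphWithLoops {
  gE  : {set {set T}};
  gLp : {set T};
  gLm : {set T};
  gE_pairs : forall e, e \in gE -> #|e| = 2;
  gL_disj : [disjoint gLp & gLm]
}.

Definition gL (T : finType) (G : graph_with_loops T) : {set T} := gLp G :|: gLm G.

Definition edge_t (T : finType) (G : graph_with_loops T) := {e : {set T} | e \in gE G}.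
Definition loop_t (T : finType) (G : graph_with_loops T) := {i : T | i \in gL G}.

Definition coord (T : finType) (G : graph_with_loops T) : finType :=
  (T + edge_t G + loop_t G)%type.

Definition zV (T : finType) (G : graph_with_loops T) (i : T) : coord G := inl (inl i).
Definition zE (T : finType) (G : graph_with_loops T) (e : edge_t G) : coord G := inl (inr e).
Definition zL (T : finType) (G : graph_with_loops T) (l : loop_t G) : coord G := inr l.

Definition QPpoints (R : realType) (T : finType) (G : graph_with_loops T)
    (z : coord G -> R) : Prop :=
  [/\ (forall l : loop_t G, val l \in gLp G -> z (zL l) >= (z (zV G (val l))) ^+ 2),
      (forall l : loop_t G, val l \in gLm G -> z (zL l) <= (z (zV G (val l))) ^+ 2),
      (forall (e : edge_t G) (i j : T), val e = [set i; j] ->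
          z (zE e) = z (zV G i) * z (zV G j)) &
      (forall i : T, 0 <= z (zV G i) <= 1)].

Definition conv_hull (R : realType) (I : finType) (A : (I -> R) -> Prop)
    (z : I -> R) : Prop :=
  exists (n : nat) (lam : 'I_n -> R) (p : 'I_n -> I -> R),
    [/\ forall k, 0 <= lam k,
        \sum_(k < n) lam k = 1,
        forall k, A (p k) &
        forall i, z i = \sum_(k < n) lam k * p k i].

Definition QP (R : realType) (T : finType) (G : graph_with_loops T) :
  (coord G -> R) -> Prop := conv_hull (@QPpoints R T G).

Definition plus_stable (T : finType) (G : graph_with_loops T) : Prop :=
  forall i j : T, [set i; j] \in gE G -> ~ (i \in gLp G /\ j \in gLp G).

Record affine (R : realType) (K : finType) := Affine { aff_coef : K -> R; aff_cst : R }.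
Definition aff_eval (R : realType) (K : finType) (f : affine R K) (x : K -> R) : R :=
  \sum_(k : K) aff_coef f k * x k + aff_cst f.

Inductive constr (R : realType) (K : finType) :=
  | CEq  of affine R K
  | CLe  of affine R K
  | CSOC of seq (affine R K) & affine R K
  | CRSOC of seq (affine R K) & affine R K & affine R K.

Definition constr_sat (R : realType) (K : finType) (c : constr R K) (x : K -> R) : Prop :=
  match c with
  | CEq f => aff_eval f x = 0
  | CLe f => aff_eval f x <= 0
  | CSOC fs g => 0 <= aff_eval g x /\
       \sum_(f <- fs) (aff_eval f x) ^+ 2 <= (aff_eval g x) ^+ 2
  | CRSOC fs g h => [/\ 0 <= aff_eval g x, 0 <= aff_eval h x &
       \sum_(f <- fs) (aff_eval f x) ^+ 2 <= aff_eval g x * aff_eval h x]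
  end.

Definition join_vec (R : realType) (I J : finType) (x : I -> R) (y : J -> R)
  : (I + J)%type -> R := fun k => match k with inl i => x i | inr j => y j end.

Definition SOC_representable (R : realType) (I : finType) (S : (I -> R) -> Prop) : Prop :=
  exists (J : finType) (m : nat) (cs : 'I_m -> constr R (I + J)%type),
    forall x : I -> R,
      S x <-> exists y : J -> R, forall c : 'I_m, constr_sat (cs c) (join_vec x y).

(* Main.v *)
Require Import Defs.
From HB Require Import structures.
From mathcomp Require Import all_boot all_order all_algebra.
From mathcomp Require Import reals.
From mathcomp Require Import ring lra.
From Stdlib Require Import FunctionalExtensionality.
Set Implicit Arguments. Unset Strict Implicit. Unset Printing Implicit Defensive.
Import Order.TTheory GRing.Theory Num.Theory.
Local Open Scope ring_scope.


Section Aff.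
Variables (R : realType) (K : finType).
Definition avar (k : K) : affine R K := Affine (fun k' => (k' == k)%:R) 0.
Definition acst (c : R) : affine R K := Affine (fun _ => 0) c.
Definition aadd (f g : affine R K) : affine R K :=
  Affine (fun k => aff_coef f k + aff_coef g k) (aff_cst f + aff_cst g).
Definition ascale (a : R) (f : affine R K) : affine R K :=
  Affine (fun k => a * aff_coef f k) (a * aff_cst f).
Definition asum (I : finType) (F : I -> affine R K) : affine R K :=
  Affine (fun k => \sum_i aff_coef (F i) k) (\sum_i aff_cst (F i)).

Lemma avarE k x : aff_eval (avar k) x = x k.
Proof.
rewrite /aff_eval /= addr0 (bigD1 k) //= eqxx mul1r big1 ?addr0 //.
by move=> i /negbTE ->; rewrite mul0r.
Qed.
Lemma acstE c x : aff_eval (acst c) x = c.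
Proof. by rewrite /aff_eval /= big1 ?add0r // => i _; rewrite mul0r. Qed.
Lemma aaddE f g x : aff_eval (aadd f g) x = aff_eval f x + aff_eval g x.
Proof.
rewrite /aff_eval /=.
under eq_bigr do rewrite mulrDl.
rewrite big_split /=; ring.
Qed.
Lemma ascaleE a f x : aff_eval (ascale a f) x = a * aff_eval f x.
Proof.
rewrite /aff_eval /= mulrDr mulr_sumr; congr (_ + _).
by apply: eq_bigr => i _; rewrite mulrA.
Qed.
Lemma asumE (I : finType) (F : I -> affine R K) x :
  aff_eval (asum F) x = \sum_i aff_eval (F i) x.
Proof.
rewrite /aff_eval /=.
under eq_bigr do rewrite mulr_suml.
by rewrite exchange_big /= -big_split.
Qed.
End Aff.
Arguments avar {R K}.
Arguments acst {R K}.


Section Main.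
Variables (R : realType) (T : finType) (G : graph_with_loops T).
Definition V := {ffun T -> bool}.
Definition J : finType := (V * option (Defs.coord G))%type.
Definition Kt : finType := (Defs.coord G + J)%type.
Definition kZ (c : Defs.coord G) : Kt := inl c.
Definition kL (v : V) : Kt := inr (v, None).
Definition kX (v : V) (c : Defs.coord G) : Kt := inr (v, Some c).
Notation P := (gLp G).
Definition bR (b : bool) : R := b%:R.
Local Notation zv c := (@avar R Kt (kZ c)).
Local Notation lamv v := (@avar R Kt (kL v)).
Local Notation Xv v c := (@avar R Kt (kX v c)).

Definition Cidx := (V + unit + Defs.coord G + (V * T) + (V * T) + (V * edge_t G * T * T)
   + (V * loop_t G))%type.

Definition ctr (k : Cidx) : constr R Kt :=
  match k with
  | inl (inl (inl (inl (inl (inl v))))) => CLe (ascale (-1) (lamv v))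
  | inl (inl (inl (inl (inl (inr _))))) => CEq (aadd (asum (fun v => lamv v)) (acst (-1)))
  | inl (inl (inl (inl (inr c)))) => CEq (aadd (zv c) (ascale (-1) (asum (fun v => Xv v c))))
  | inl (inl (inl (inr (v, i)))) => if i \in P then CLe (ascale (-1) (Xv v (zV G i)))
        else CEq (aadd (Xv v (zV G i)) (ascale (- bR (v i)) (lamv v)))
  | inl (inl (inr (v, i))) => if i \in P then CLe (aadd (Xv v (zV G i)) (ascale (-1) (lamv v)))
        else CEq (acst 0)
  | inl (inr (v, e, i, j)) => if (val e == [set i; j]) && (i \notin P) then
        CEq (aadd (Xv v (zE e)) (ascale (- bR (v i)) (Xv v (zV G j)))) else CEq (acst 0)
  | inr (v, l) => if val l \in P then CRSOC [:: Xv v (zV G (val l))] (Xv v (zL l)) (lamv v)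
        else CLe (aadd (Xv v (zL l)) (ascale (- bR (v (val l))) (lamv v)))
  end.

Local Notation lam x v := (x (kL v)).
Local Notation X x v c := (x (kX v c)).

Definition Good (x : Kt -> R) : Prop :=
  (forall v, 0 <= lam x v) /\
  (\sum_v lam x v = 1) /\
  (forall c, x (kZ c) = \sum_v X x v c) /\
  (forall v i, if i \in P then 0 <= X x v (zV G i) /\ X x v (zV G i) <= lam x v
                  else X x v (zV G i) = bR (v i) * lam x v) /\
  (forall v e i j, val e = [set i; j] -> i \notin P ->
          X x v (zE e) = bR (v i) * X x v (zV G j)) /\
  (forall v l, val l \in P -> [/\ 0 <= X x v (zL l), 0 <= lam x v &
          X x v (zV G (val l)) ^+ 2 <= X x v (zL l) * lam x v]) /\
  (forall v l, val l \notin P -> X x v (zL l) <= bR (v (val l)) * lam x v).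

Lemma sum_avar (I : finType) (f : I -> Kt) (x : Kt -> R) :
  \sum_i aff_eval (avar (f i)) x = \sum_i x (f i).
Proof. by apply: eq_bigr => i _; rewrite avarE. Qed.

Lemma sat_iff x : (forall k, constr_sat (ctr k) x) <-> Good x.
Proof.
split.
- move=> H; split; [|split; [|split; [|split; [|split; [|split]]]]].
  + move=> v; have := H (inl (inl (inl (inl (inl (inl v)))))).
    rewrite /= ascaleE avarE; lra.
  + have := H (inl (inl (inl (inl (inl (inr tt)))))).
    rewrite /= aaddE asumE acstE sum_avar; lra.
  + move=> c; have := H (inl (inl (inl (inl (inr c))))).
    rewrite /= aaddE ascaleE asumE avarE sum_avar; lra.
  + move=> v i; have := H (inl (inl (inl (inr (v, i))))).
    have := H (inl (inl (inr (v, i)))).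
    rewrite /=; case: (i \in P) => /=.
      rewrite aaddE !ascaleE !avarE; split; lra.
    rewrite !aaddE !ascaleE !avarE; lra.
  + move=> v e i j ei iP; have := H (inl (inr (v, e, i, j))).
    rewrite /= ei eqxx iP andbT; cbv delta [constr_sat] iota beta.
    move: (kX v (zE e)) (kX v (zV G j)) => k1 k2.
    rewrite aaddE ascaleE !avarE; lra.
  + move=> v l lP; have := H (inr (v, l)).
    rewrite /= lP; cbv delta [constr_sat] iota beta.
    move: (kX v (zL l)) (kX v (zV G (val l))) (kL v) => k1 k2 k3.
    by rewrite big_seq1 !avarE.
  + move=> v l lP; have := H (inr (v, l)).
    rewrite /= (negbTE lP); cbv delta [constr_sat] iota beta.
    move: (kX v (zL l)) (kL v) => k1 k3.
    rewrite aaddE ascaleE !avarE; lra.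
- case=> H1 [H2 [H3 [H4 [H5 [H6 H7]]]]].
  case=> [[[[[[v|[]]|c]|[v i]]|[v i]]|[[[v e] i] j]]|[v l]] /=.
  + rewrite ascaleE avarE; have := H1 v; lra.
  + rewrite aaddE asumE acstE sum_avar H2; lra.
  + rewrite aaddE ascaleE asumE avarE sum_avar H3; lra.
  + have := H4 v i; case: (i \in P) => /=.
      rewrite ascaleE avarE; case; lra.
    rewrite aaddE ascaleE !avarE; lra.
  + have := H4 v i; case: (i \in P) => /=.
      rewrite aaddE ascaleE !avarE; case; lra.
    by rewrite acstE.
  + case: eqP => [ei|] /=; last by rewrite acstE.
    case: (boolP (i \in P)) => iP /=; last first.
      move: (H5 v e i j ei iP); move: (kX v (zE e)) (kX v (zV G j)) => k1 k2 h.
      rewrite aaddE ascaleE !avarE h; lra.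
    by rewrite acstE.
  + case: (boolP (val l \in P)) => lP /=.
      move: (H6 v l lP); move: (kX v (zL l)) (kX v (zV G (val l))) (kL v) => k1 k2 k3.
      by rewrite big_seq1 !avarE.
    move: (H7 v l lP); move: (kX v (zL l)) (kL v) => k1 k3.
    rewrite aaddE ascaleE !avarE; lra.
Qed.

Lemma edge_ne (e : edge_t G) i j : val e = [set i; j] -> i != j.
Proof.
move=> ei; apply/negP=> /eqP ij; have := gE_pairs (valP e).
by rewrite ei ij setUid cards1.
Qed.

Lemma edge_ends (hs : plus_stable G) (e : edge_t G) :
  exists i j, val e = [set i; j] /\ i \notin P.
Proof.
have /eqP/cards2P [i [j [_ ei]]] := gE_pairs (valP e).
case: (boolP (i \in P)) => iP; last by exists i, j.
exists j, i; split; first by rewrite ei /= setUC.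
apply/negP => jP; apply: (hs i j); last by [].
by rewrite -ei (valP e).
Qed.

Lemma plus_other (hs : plus_stable G) (e : edge_t G) i j :
  val e = [set i; j] -> i \in P -> j \notin P.
Proof.
move=> ei iP; apply/negP => jP; apply: (hs i j); last by [].
by rewrite -ei (valP e).
Qed.

Section DirB.
Variables (x : Kt -> R) (hs : plus_stable G) (Hx : Good x).

Definition DB (c : Defs.coord G) : R := \sum_v (if x (kL v) == 0 then x (kX v c) else 0).
Definition PtB (v : V) (c : Defs.coord G) : R :=
  if x (kL v) == 0 then 0 else x (kX v c) / x (kL v) + DB c.

Lemma node0 v i : x (kL v) = 0 -> x (kX v (zV G i)) = 0.
Proof.
case: Hx => _ [_ [_ [H4 _]]] l0; have := H4 v i; rewrite l0.
case: (i \in P) => [[]|->]; [lra|by rewrite mulr0].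
Qed.

Lemma DB_node i : DB (zV G i) = 0.
Proof.
rewrite /DB big1 // => v _; case: eqP => // /eqP l0.
by apply: node0; apply/eqP.
Qed.

Lemma DB_edge e : DB (zE e) = 0.
Proof.
case: (edge_ends hs e) => i [j [ei iP]].
case: Hx => _ [_ [_ [_ [H5 _]]]].
rewrite /DB big1 // => v _; case: eqP => // /eqP l0.
by rewrite (H5 v e i j ei iP) node0 ?mulr0 //; apply/eqP.
Qed.

Lemma DB_plus l : val l \in P -> 0 <= DB (zL l).
Proof.
case: Hx => _ [_ [_ [_ [_ [H6 _]]]]] lP.
rewrite /DB sumr_ge0 // => v _; case: eqP => // _.
by case: (H6 v l lP).
Qed.

Lemma DB_minus l : val l \notin P -> DB (zL l) <= 0.
Proof.
case: Hx => _ [_ [_ [_ [_ [_ H7]]]]] lP.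
rewrite /DB sumr_le0 // => v _; case: eqP => // l0.
by have := H7 v l lP; rewrite l0 mulr0.
Qed.

Lemma bR01 b : bR b = 0 \/ bR b = 1.
Proof. by case: b; [right|left]. Qed.

Lemma sq_div (a b l : R) : 0 < l -> a ^+ 2 <= b * l -> (a / l) ^+ 2 <= b / l.
Proof.
move=> l0 h.
have e1 : a = (a / l) * l by rewrite divfK // gt_eqF.
have e2 : b = (b / l) * l by rewrite divfK // gt_eqF.
move: h; rewrite {1}e1 {1}e2; move: (a / l) (b / l) => a' b' h.
have l2 : 0 < l * l by apply: mulr_gt0.
nra.
Qed.

Lemma PtB_QP v : QPpoints (PtB v).
Proof.
case: Hx => H1 [_ [_ [H4 [H5 [H6 H7]]]]].
rewrite /PtB; case: eqP => [_|/eqP ln0].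
  split => //=.
  - by move=> l _; rewrite expr0n.
  - by move=> l _; rewrite expr0n.
  - by move=> e i j _; rewrite mulr0.
  - by move=> i; rewrite lexx ler01.
have lp : 0 < x (kL v) by rewrite lt0r ln0 H1.
have lu : x (kL v) != 0 := ln0.
split.
- move=> l lP; rewrite DB_node addr0.
  have h6 := H6 v l lP; case: h6 => _ _ h.
  have := sq_div lp h; have := DB_plus lP; lra.
- move=> l lM; rewrite DB_node addr0.
  have lP : val l \notin P.
    by apply/negP => lP; have := gL_disj G; rewrite disjoint_subset => /subsetP/(_ _ lP); rewrite inE lM.
  have := H4 v (val l); rewrite (negbTE lP) => ->.
  rewrite mulfK //.
  have h : x (kX v (zL l)) / x (kL v) <= bR (v (val l)).
    by rewrite ler_pdivrMr // H7.
  have := DB_minus lP.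
  move: h; move: (x (kX v (zL l)) / x (kL v)) (DB (zL l)) => t d h.
  case: (bR01 (v (val l))) => hb; rewrite hb expr2; lra.
- move=> e i j ei; rewrite !DB_node DB_edge !addr0.
  case: (boolP (i \in P)) => iP.
    have jP := plus_other hs ei iP.
    have ei' : val e = [set j; i] by rewrite ei setUC.
    rewrite (H5 v e j i ei' jP).
    have := H4 v j; rewrite (negbTE jP) => ->.
    by rewrite mulfK // [RHS]mulrC mulrA.
  rewrite (H5 v e i j ei iP).
  have := H4 v i; rewrite (negbTE iP) => ->.
  by rewrite mulfK // mulrA.
- move=> i; rewrite DB_node addr0.
  have := H4 v i; case: (i \in P).
    case=> h0 h1; apply/andP; split; first by rewrite divr_ge0.
    by rewrite ler_pdivrMr // mul1r.
  move=> ->; rewrite mulfK // /bR; by case: (v i); rewrite /= ?lexx ?ler01.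
Qed.

Lemma PtB_sum c : \sum_v x (kL v) * PtB v c = x (kZ c).
Proof.
case: Hx => H1 [H2 [H3 _]].
rewrite H3.
have -> : \sum_v x (kL v) * PtB v c =
   \sum_v ((if x (kL v) == 0 then 0 else x (kX v c)) + x (kL v) * DB c).
  apply: eq_bigr => v _; rewrite /PtB; case: eqP => [->|/eqP ln0].
    by rewrite !mul0r addr0.
  by rewrite mulrDr mulrC divfK.
rewrite big_split /= -mulr_suml H2 mul1r /DB -big_split /=.
by apply: eq_bigr => v _; case: eqP; rewrite ?add0r ?addr0.
Qed.

End DirB.

Lemma CS_aux (A B C y : R) : 0 <= A -> 0 <= C -> B ^+ 2 <= C * A ->
  2 * B * y <= C + A * y ^+ 2.
Proof.
move=> hA hC h.
case: (eqVneq A 0) => [A0|An0].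
  move: h; rewrite A0 mulr0 => h.
  have B0 : B = 0 by apply/eqP; rewrite -sqrf_eq0 eq_le h sqr_ge0.
  rewrite B0 mulr0 mul0r mul0r addr0 //.
have Ap : 0 < A by rewrite lt0r An0 hA.
have h2 : 0 <= (B - A * y) ^+ 2 := sqr_ge0 _.
have h3 : 0 <= A * (C + A * y ^+ 2 - 2 * B * y) by nra.
have h4 : 0 <= C + A * y ^+ 2 - 2 * B * y.
  by rewrite -(pmulr_rge0 _ Ap).
lra.
Qed.

Lemma CS n (a y t : 'I_n -> R) : (forall k, 0 <= a k) -> (forall k, y k ^+ 2 <= t k) ->
  (\sum_k a k * y k) ^+ 2 <= (\sum_k a k * t k) * (\sum_k a k).
Proof.
elim: n a y t => [|n IH] a y t ha hyt.
  by rewrite !big_ord0 expr0n mul0r.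
rewrite !big_ord_recr /=.
have := IH (fun i => a (widen_ord (leqnSn n) i)) (fun i => y (widen_ord (leqnSn n) i))
  (fun i => t (widen_ord (leqnSn n) i)) (fun k => ha _) (fun k => hyt _) => /=.
have hA : 0 <= \sum_(i < n) a (widen_ord (leqnSn n) i) by apply: sumr_ge0 => k _.
have hC : 0 <= \sum_(i < n) a (widen_ord (leqnSn n) i) * t (widen_ord (leqnSn n) i).
  apply: sumr_ge0 => k _; apply: mulr_ge0 => //; apply: le_trans (hyt _); exact: sqr_ge0.
move: hA hC.
move: (\sum_(i < n) a (widen_ord (leqnSn n) i)) (\sum_(i < n) a (widen_ord (leqnSn n) i) * t (widen_ord (leqnSn n) i))
  (\sum_(i < n) a (widen_ord (leqnSn n) i) * y (widen_ord (leqnSn n) i)) => A C B hA hC h.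
have := ha ord_max; have := hyt ord_max.
move: (a ord_max) (y ord_max) (t ord_max) => a0 y0 t0 hyt0 ha0.
have h1 : 0 <= a0 * (C + A * y0 ^+ 2 - 2 * B * y0).
  by apply: mulr_ge0 => //; have := CS_aux y0 hA hC h; lra.
have h2 : 0 <= (a0 * A) * (t0 - y0 ^+ 2) by apply: mulr_ge0; [apply: mulr_ge0|lra].
have h3 : 0 <= (a0 * a0) * (t0 - y0 ^+ 2) by apply: mulr_ge0; [apply: mulr_ge0|lra].
nra.
Qed.

Definition xp (p0 : Defs.coord G -> R) (i : T) : R := p0 (zV G i).
Definition w (p0 : Defs.coord G -> R) (i : T) (b : bool) : R :=
  if i \in P then (if b then 0 else 1) else (if b then xp p0 i else 1 - xp p0 i).
Definition mu (p0 : Defs.coord G -> R) (v : V) : R := \prod_i w p0 i (v i).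
Definition yb (p0 : Defs.coord G -> R) (i : T) (b : bool) : R :=
  if i \in P then xp p0 i else bR b.

Lemma moment p0 (S : {set T}) :
  \sum_v mu p0 v * \prod_(i in S) yb p0 i (v i) = \prod_(i in S) xp p0 i.
Proof.
have e1 : forall v : V, mu p0 v * \prod_(i in S) yb p0 i (v i) =
    \prod_i (w p0 i (v i) * (if i \in S then yb p0 i (v i) else 1)).
  by move=> v; rewrite /mu big_split /= -big_mkcond.
rewrite (eq_bigr _ (fun v _ => e1 v)).
rewrite -(bigA_distr_bigA (fun i b => w p0 i b * (if i \in S then yb p0 i b else 1))).
rewrite [RHS]big_mkcond; apply: eq_bigr => i _; rewrite big_bool /w /yb /bR.
by case: (i \in S); case: (i \in P); rewrite /=; ring.
Qed.

Lemma mu_sum p0 : \sum_v mu p0 v = 1.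
Proof.
have := moment p0 set0; rewrite big_set0.
under eq_bigr do rewrite big_set0 mulr1.
by [].
Qed.

Lemma mu_node p0 i : \sum_v mu p0 v * yb p0 i (v i) = xp p0 i.
Proof.
have := moment p0 [set i]; rewrite big_set1.
by under eq_bigr do rewrite big_set1.
Qed.

Lemma mu_ge0 p0 v : (forall i, 0 <= xp p0 i <= 1) -> 0 <= mu p0 v.
Proof.
move=> h; rewrite /mu; apply: prodr_ge0 => i _; rewrite /w.
have := h i; case: (i \in P); case: (v i) => /andP [h0 h1] //; lra.
Qed.

Definition qv (p0 : Defs.coord G -> R) (v : V) (c : Defs.coord G) : R :=
  match c with
  | inl (inl i) => yb p0 i (v i)
  | inl (inr e) => \prod_(i in val e) yb p0 i (v i)
  | inr l => if val l \in P then p0 (zL l) else bR (v (val l)) - xp p0 (val l) + p0 (zL l)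
  end.

Lemma qvV p0 v i : qv p0 v (zV G i) = yb p0 i (v i). Proof. by []. Qed.
Lemma qvE p0 v e : qv p0 v (zE e) = \prod_(i in val e) yb p0 i (v i). Proof. by []. Qed.
Lemma qvL p0 v l : qv p0 v (zL l) =
  if val l \in P then p0 (zL l) else bR (v (val l)) - xp p0 (val l) + p0 (zL l).
Proof. by []. Qed.

Lemma prod2 (F : T -> R) (e : edge_t G) i j : val e = [set i; j] ->
  \prod_(k in val e) F k = F i * F j.
Proof.
move=> ei; rewrite ei big_setU1 ?big_set1 //=.
by rewrite in_set1; exact: (edge_ne ei).
Qed.

Lemma qsum p0 (hp : QPpoints p0) c : \sum_v mu p0 v * qv p0 v c = p0 c.
Proof.
case: hp => hplus hminus hedge hnode.
case: c => [[i|e]|l].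
- exact: (mu_node p0 i).
- rewrite -[inl (inr e)]/(zE e).
  under eq_bigr do rewrite qvE.
  rewrite moment.
  have /eqP/cards2P [i [j [_ ei]]] := gE_pairs (valP e).
  by rewrite (prod2 _ ei) (hedge e i j ei).
- rewrite -[inr l]/(zL l).
  under eq_bigr do rewrite qvL.
  case: (boolP (val l \in P)) => lP.
    by rewrite -mulr_suml mu_sum mul1r.
  have -> : \sum_v mu p0 v * (bR (v (val l)) - xp p0 (val l) + p0 (zL l)) =
     \sum_v mu p0 v * yb p0 (val l) (v (val l)) + (p0 (zL l) - xp p0 (val l)) * \sum_v mu p0 v.
    rewrite mulr_sumr -big_split /=; apply: eq_bigr => v _.
    rewrite /yb (negbTE lP); ring.
  by rewrite mu_node mu_sum; ring.
Qed.

Section DirA.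
Variables (n : nat) (lam : 'I_n -> R) (p : 'I_n -> Defs.coord G -> R).
Hypotheses (Hl : forall k, 0 <= lam k) (Hs : \sum_k lam k = 1) (Hp : forall k, QPpoints (p k)).

Definition LamA (v : V) : R := \sum_k lam k * mu (p k) v.
Definition XA (v : V) (c : Defs.coord G) : R := \sum_k lam k * mu (p k) v * qv (p k) v c.
Definition xA (kk : Kt) : R :=
  match kk with
  | inl c => \sum_k lam k * p k c
  | inr (v, None) => LamA v
  | inr (v, Some c) => XA v c
  end.

Lemma xAZ c : xA (kZ c) = \sum_k lam k * p k c. Proof. by []. Qed.
Lemma xAL v : xA (kL v) = LamA v. Proof. by []. Qed.
Lemma xAX v c : xA (kX v c) = XA v c. Proof. by []. Qed.

Lemma Hnode k i : 0 <= xp (p k) i <= 1.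
Proof. by case: (Hp k) => _ _ _ h; apply: h. Qed.

Lemma a_ge0 k v : 0 <= lam k * mu (p k) v.
Proof. by apply: mulr_ge0 => //; apply: mu_ge0 => i; apply: Hnode. Qed.

Lemma GoodA (hs : plus_stable G) : Good xA.
Proof.
split; [|split; [|split; [|split; [|split; [|split]]]]].
- by move=> v; rewrite xAL; apply: sumr_ge0 => k _; apply: a_ge0.
- under eq_bigr do rewrite xAL.
  rewrite /LamA exchange_big /= -Hs; apply: eq_bigr => k _.
  by rewrite -mulr_sumr mu_sum mulr1.
- move=> c; rewrite xAZ.
  under [RHS]eq_bigr do rewrite xAX.
  rewrite /XA exchange_big /=; apply: eq_bigr => k _.
  rewrite -(qsum (Hp k) c) mulr_sumr; apply: eq_bigr => v _; by rewrite mulrA.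
- move=> v i; rewrite xAX xAL /XA /LamA.
  under eq_bigr do rewrite qvV.
  case: (boolP (i \in P)) => iP.
    rewrite /yb iP; split.
      by apply: sumr_ge0 => k _; apply: mulr_ge0; [apply: a_ge0|case/andP: (Hnode k i)].
    apply: ler_sum => k _; apply: ler_piMr; first exact: a_ge0.
    by case/andP: (Hnode k i).
  rewrite mulr_sumr; apply: eq_bigr => k _; rewrite /yb (negbTE iP); ring.
- move=> v e i j ei iP; rewrite !xAX /XA mulr_sumr.
  apply: eq_bigr => k _; rewrite qvE qvV (prod2 _ ei) {1}/yb (negbTE iP); ring.
- move=> v l lP; rewrite !xAX xAL /XA /LamA.
  under eq_bigr do rewrite qvL lP.
  under [Y in Y ^+ 2]eq_bigr do rewrite qvV /yb lP.
  have ht : forall k, xp (p k) (val l) ^+ 2 <= p k (zL l).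
    by move=> k; case: (Hp k) => h _ _ _; apply: h.
  split.
  + apply: sumr_ge0 => k _; apply: mulr_ge0; first exact: a_ge0.
    apply: le_trans (ht k); exact: sqr_ge0.
  + by apply: sumr_ge0 => k _; apply: a_ge0.
  + exact: (CS (fun k => a_ge0 k v) ht).
- move=> v l lP; rewrite !xAX xAL /XA /LamA mulr_sumr.
  apply: ler_sum => k _; rewrite qvL (negbTE lP).
  have lM : val l \in gLm G.
    by have := valP l; rewrite /gL in_setU (negbTE lP).
  have hm : p k (zL l) <= xp (p k) (val l) ^+ 2.
    by case: (Hp k) => _ h _ _; apply: h.
  have := Hnode k (val l); have := a_ge0 k v.
  move: hm; move: (lam k * mu (p k) v) (xp (p k) (val l)) (p k (zL l)) (bR (v (val l))) => a x0 t b hm ha /andP [h0 h1].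
  have : t <= x0 by nra.
  move=> htx; have : a * (b - x0 + t) <= a * b by apply: ler_wpM2l => //; lra.
  lra.
Qed.
End DirA.
End Main.


Lemma sum_enum (R : realType) (I : finType) (F : I -> R) :
  \sum_(k < #|{: I}|) F (enum_val k) = \sum_i F i.
Proof. by rewrite -big_enum_val. Qed.

Theorem theorem2 (R : realType) (T : finType) (G : graph_with_loops T) :
  plus_stable G -> SOC_representable (@QP R T G).
Proof.
move=> hs.
exists (@J T G), #|{: Cidx G}|, (fun k => @ctr R T G (enum_val k)).
move=> z; split.
- case=> n [lam [p [Hl Hs Hp Hz]]].
  exists (fun j => xA lam p (inr j)).
  have HG := GoodA Hl Hs Hp hs.
  have Hsat := (sat_iff (xA lam p)).2 HG.
  have ext : join_vec z (fun j => xA lam p (inr j)) = xA lam p.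
    apply: functional_extensionality => k; case: k => [c|j] //.
    by rewrite /= Hz.
  by move=> k; rewrite ext; apply: Hsat.
- case=> y Hy.
  have HG : Good (join_vec z y).
    by apply/sat_iff => k; have := Hy (enum_rank k); rewrite enum_rankK.
  exists #|{: V T}|, (fun k => join_vec z y (kL G (enum_val k))),
    (fun k => PtB (join_vec z y) (enum_val k)).
  split.
  + by move=> k; case: HG => H1 _; apply: H1.
  + rewrite (sum_enum (fun v => join_vec z y (kL G v))). by case: HG => _ [H2 _].
  + by move=> k; apply: PtB_QP.
  + move=> c; rewrite (sum_enum (fun v => join_vec z y (kL G v) * PtB (join_vec z y) v c)).
    by rewrite PtB_sum.
Qed.
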